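(* Let $n>p=p_n$ and $r_n=(-\log(1-\frac pn))^{1/2}$. Assume $p/n\to y\in(0,1]$ and $t=t_n=O(1/r_n)$ as $n\to\infty$ ($t_n$ real). Then $$\log\Big[\frac{\Gamma(\frac n2+t)}{\Gamma(\frac n2)}\cdot\frac{\Gamma(\frac{n-p}2)}{\Gamma(\frac{n-p}2+t)}\Big]=r_n^2t+o(1)$$ as $n\to\infty$.
   Context: $\Gamma$ is the Gamma function. *)

(* Defs.v *)
From Stdlib Require Import Reals.
From Coquelicot Require Import Coquelicot.
Open Scope R_scope.

Definition Gamma (x : R) : R :=
  RInt_gen (fun s => Rpower s (x - 1) * exp (- s))
           (at_right 0) (Rbar_locally p_infty).

Definition r_seq (p : nat -> nat) (n : nat) : R :=
  sqrt (- ln (1 - INR (p n) / INR n)).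

(* Main.v *)
Require Import Defs.
From Stdlib Require Import Reals Lra Lia.
From Coquelicot Require Import Coquelicot.
Open Scope R_scope.

Lemma exR (f : R -> R) a b :
  (forall s, 0 < s -> continuous f s) -> 0 < a -> 0 < b -> ex_RInt f a b.
Proof.
  intros fc ha hb. apply (@ex_RInt_continuous R_CompleteNormedModule). intros z [hz _].
  apply fc. eapply Rlt_le_trans; [|exact hz]. unfold Rmin; destruct Rle_dec; lra.
Qed.

Lemma RInt_nn (f : R -> R) a b :
  (forall s, 0 < s -> continuous f s) -> (forall s, 0 < s -> 0 <= f s) ->
  0 < a -> a <= b -> 0 <= RInt f a b.
Proof.
  intros fc fn ha hab. apply RInt_ge_0; auto. apply exR; auto; lra.
  intros x hx; apply fn; lra.
Qed.

Lemma RInt_mono (f : R -> R) a' a b b' :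
  (forall s, 0 < s -> continuous f s) -> (forall s, 0 < s -> 0 <= f s) ->
  0 < a' -> a' <= a -> a <= b -> b <= b' -> RInt f a b <= RInt f a' b'.
Proof.
  intros fc fn h1 h2 h3 h4.
  rewrite <- (RInt_Chasles f a' a b') by (apply exR; auto; lra).
  rewrite <- (RInt_Chasles f a b b') by (apply exR; auto; lra).
  pose proof (RInt_nn f a' a fc fn h1 h2).
  pose proof (RInt_nn f b b' fc fn ltac:(lra) h4).
  change plus with Rplus. lra.
Qed.

Lemma sup_gen (f : R -> R) :
  (forall s, 0 < s -> continuous f s) -> (forall s, 0 < s -> 0 <= f s) ->
  (exists M, forall a b, 0 < a -> a <= b -> RInt f a b <= M) ->
  exists L, is_RInt_gen f (at_right 0) (Rbar_locally p_infty) L /\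
    (forall a b, 0 < a -> a <= b -> RInt f a b <= L) /\
    (forall eps, 0 < eps -> exists a b, 0 < a /\ a <= b /\ L - eps < RInt f a b).
Proof.
  intros fc fn [M HM].
  set (E := fun v => exists a b, 0 < a /\ a <= b /\ v = RInt f a b).
  assert (bE : bound E).
  { exists M. intros v [a [b [ha [hb ->]]]]. apply HM; auto. }
  assert (nE : exists v, E v).
  { exists (RInt f 1 1). exists 1, 1. repeat split; lra. }
  destruct (completeness E bE nE) as [L [HL1 HL2]].
  assert (up : forall a b, 0 < a -> a <= b -> RInt f a b <= L).
  { intros a b ha hb. apply HL1. exists a, b; auto. }
  assert (ap : forall eps, 0 < eps -> exists a b, 0 < a /\ a <= b /\ L - eps < RInt f a b).
  { intros eps he. apply Classical_Prop.NNPP. intros Hn.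
    assert (L <= L - eps); [|lra].
    apply HL2. intros v [a [b [ha [hb ->]]]].
    destruct (Rle_lt_dec (RInt f a b) (L - eps)); auto.
    exfalso; apply Hn; exists a, b; auto. }
  exists L. split; [|split; auto].
  intros P [eps HP].
  destruct (ap eps (cond_pos eps)) as [a0 [b0 [ha0 [hb0 hi]]]].
  exists (fun a => 0 < a < a0) (fun b => b0 < b).
  - exists (mkposreal a0 ha0). intros z hz hz0. split; auto.
    unfold ball in hz; simpl in hz; unfold AbsRing_ball, abs, minus, plus, opp in hz; simpl in hz.
    apply Rabs_def2 in hz. lra.
  - exists b0. auto.
  - intros a b [ha1 ha2] hb. simpl. exists (RInt f a b). split.
    + apply (@RInt_correct R_CompleteNormedModule). apply exR; auto; lra.
    + apply HP. unfold ball; simpl; unfold AbsRing_ball, abs, minus, plus, opp; simpl.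
      pose proof (up a b ha1 ltac:(lra)).
      pose proof (RInt_mono f a0 a0 b0 b fc fn ha0 ltac:(lra) hb0 ltac:(lra)).
      pose proof (RInt_mono f a a0 b0 b fc fn ha1 ltac:(lra) hb0 ltac:(lra)).
      apply Rabs_def1; lra.
Qed.
Definition F (x : R) := fun s => Rpower s (x - 1) * exp (- s).

Lemma ln_le_m1 u : 0 < u -> ln u <= u - 1.
Proof.
  intros hu. destruct (Rle_lt_dec (ln u) (u - 1)) as [h|h]; auto.
  apply exp_increasing in h. rewrite exp_ln in h by auto.
  pose proof (exp_ineq1_le (u - 1)). lra.
Qed.

Lemma ln_ge_1m u : 0 < u -> 1 - / u <= ln u.
Proof.
  intros hu. pose proof (ln_le_m1 (/ u) (Rinv_0_lt_compat _ hu)).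
  rewrite ln_Rinv in H by auto. lra.
Qed.

Lemma Rpower_pos a c : 0 < Rpower a c.
Proof. unfold Rpower; apply exp_pos. Qed.

Lemma F_pos x s : 0 < F x s.
Proof. unfold F. apply Rmult_lt_0_compat; [apply Rpower_pos|apply exp_pos]. Qed.

Lemma F_cont x s : 0 < s -> continuous (F x) s.
Proof.
  intros hs. apply (@ex_derive_continuous R_AbsRing R_NormedModule). unfold F, Rpower. auto_derive. lra.
Qed.

Lemma F_nn x s : 0 < s -> 0 <= F x s.
Proof. intros; apply Rlt_le, F_pos. Qed.

Lemma powbound c : exists K, 0 < K /\ forall s, 1 <= s -> Rpower s c <= K * exp (s / 2).
Proof.
  destruct (Rle_lt_dec c 0) as [hc|hc].
  - exists 1. split; [lra|]. intros s hs.
    apply Rle_trans with (Rpower s 0).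
    + apply Rle_Rpower; auto.
    + rewrite Rpower_O by lra. pose proof (exp_ineq1_le (s/2)). lra.
  - exists (exp (c * (ln (2 * c) - 1))). split; [apply exp_pos|].
    intros s hs. unfold Rpower. rewrite <- exp_plus. 
    destruct (Rle_lt_dec (c * ln s) (c * (ln (2 * c) - 1) + s / 2)) as [h|h].
    + destruct h as [h|h]; [left; apply exp_increasing; auto | right; rewrite h; auto].
    + exfalso.
      assert (e : ln s = ln (s / (2 * c)) + ln (2 * c)).
      { rewrite ln_div by lra. ring. }
      pose proof (ln_le_m1 (s / (2 * c)) ltac:(apply Rdiv_lt_0_compat; lra)).
      assert (c * ln (s / (2 * c)) <= c * (s / (2 * c) - 1)) by (apply Rmult_le_compat_l; lra).
      assert (c * (s / (2 * c)) = s / 2) by (field; lra).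
      rewrite e in h. nra.
Qed.

Lemma int_near0 x a : 0 < x -> 0 < a -> a <= 1 -> RInt (F x) a 1 <= / x.
Proof.
  intros hx ha ha1.
  assert (D : forall s, 0 < s -> is_derive (fun s => Rpower s x / x) s (Rpower s (x - 1))).
  { intros s hs. unfold Rpower. auto_derive; [lra|].
    replace ((x - 1) * ln s) with (x * ln s + - ln s) by ring.
    rewrite exp_plus, exp_Ropp, exp_ln by lra. field. lra. }
  assert (I : is_RInt (fun s => Rpower s (x - 1)) a 1 (minus (Rpower 1 x / x) (Rpower a x / x))).
  { apply (@is_RInt_derive R_CompleteNormedModule (fun s => Rpower s x / x)).
    - intros z [hz _]. apply D. eapply Rlt_le_trans; [|exact hz]. unfold Rmin; destruct Rle_dec; lra.
    - intros z [hz _]. apply (@ex_derive_continuous R_AbsRing R_NormedModule). unfold Rpower. auto_derive.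
      eapply Rlt_le_trans; [|exact hz]. unfold Rmin; destruct Rle_dec; lra. }
  apply Rle_trans with (RInt (fun s => Rpower s (x - 1)) a 1).
  - apply RInt_le; auto.
    + apply exR; auto; [intros; apply F_cont; auto | lra].
    + eexists; exact I.
    + intros s hs. unfold F. pose proof (Rpower_pos s (x-1)).
      assert (exp (- s) <= 1). { left. rewrite <- exp_0. apply exp_increasing. lra. }
      nra.
  - rewrite (is_RInt_unique _ _ _ _ I). unfold minus, plus, opp; simpl.
    unfold Rpower at 1. rewrite ln_1, Rmult_0_r, exp_0.
    pose proof (Rpower_pos a x). assert (0 < /x) by (apply Rinv_0_lt_compat; auto).
    unfold Rdiv. nra.
Qed.

Lemma int_far x b K : 0 < K -> (forall s, 1 <= s -> Rpower s (x - 1) <= K * exp (s / 2)) ->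
  1 <= b -> RInt (F x) 1 b <= 2 * K.
Proof.
  intros hK HK hb.
  assert (I : is_RInt (fun s => K * exp (- s / 2)) 1 b
                (minus (-2 * K * exp (- b / 2)) (-2 * K * exp (- 1 / 2)))).
  { apply (@is_RInt_derive R_CompleteNormedModule (fun s => -2 * K * exp (- s / 2))).
    - intros z _. auto_derive; auto. unfold Rdiv. field.
    - intros z _. apply (@ex_derive_continuous R_AbsRing R_NormedModule). auto_derive. auto. }
  apply Rle_trans with (RInt (fun s => K * exp (- s / 2)) 1 b).
  - apply RInt_le; auto.
    + apply exR; auto; [intros; apply F_cont; auto | lra | lra].
    + eexists; exact I.
    + intros s hs. unfold F. pose proof (HK s ltac:(lra)).
      replace (K * exp (- s / 2)) with (K * exp (s / 2) * exp (- s)).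
      * apply Rmult_le_compat_r; auto. apply Rlt_le, exp_pos.
      * rewrite Rmult_assoc, <- exp_plus. f_equal. f_equal. field.
  - rewrite (is_RInt_unique _ _ _ _ I). unfold minus, plus, opp; simpl.
    pose proof (exp_pos (- b / 2)). pose proof (exp_pos (- 1 / 2)).
    assert (exp (- 1/2) <= 1).
    { left. rewrite <- exp_0. apply exp_increasing. lra. }
    nra.
Qed.

Lemma F_bounded x : 0 < x -> exists M, forall a b, 0 < a -> a <= b -> RInt (F x) a b <= M.
Proof.
  intros hx. destruct (powbound (x - 1)) as [K [hK HK]].
  exists (/ x + 2 * K). intros a b ha hab.
  apply Rle_trans with (RInt (F x) (Rmin a 1) (Rmax b 1)).
  - apply RInt_mono; auto; [intros; apply F_cont; auto | intros; apply F_nn; auto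
      | unfold Rmin; destruct Rle_dec; lra | unfold Rmin; destruct Rle_dec; lra
      | unfold Rmax; destruct Rle_dec; lra].
  - rewrite <- (RInt_Chasles (F x) (Rmin a 1) 1 (Rmax b 1)).
    + change plus with Rplus.
      pose proof (int_near0 x (Rmin a 1) hx ltac:(unfold Rmin; destruct Rle_dec; lra)
                   ltac:(unfold Rmin; destruct Rle_dec; lra)).
      pose proof (int_far x (Rmax b 1) K hK HK ltac:(unfold Rmax; destruct Rle_dec; lra)).
      lra.
    + apply exR; [intros; apply F_cont; auto | unfold Rmin; destruct Rle_dec; lra | lra].
    + apply exR; [intros; apply F_cont; auto | lra | unfold Rmax; destruct Rle_dec; lra].
Qed.

Lemma Gchar x : 0 < x ->
  (forall a b, 0 < a -> a <= b -> RInt (F x) a b <= Gamma x) /\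
  (forall eps, 0 < eps -> exists a b, 0 < a /\ a <= b /\ Gamma x - eps < RInt (F x) a b).
Proof.
  intros hx.
  destruct (sup_gen (F x) (fun s hs => F_cont x s hs) (fun s hs => F_nn x s hs) (F_bounded x hx))
    as [L [HL [H1 H2]]].
  replace (Gamma x) with L; [auto|].
  symmetry. unfold Gamma. apply (@is_RInt_gen_unique R_CompleteNormedModule); try typeclasses eauto.
  exact HL.
Qed.

Lemma exp_le a b : a <= b -> exp a <= exp b.
Proof. intros [h|h]; [left; apply exp_increasing; auto| right; rewrite h; auto]. Qed.

Lemma F_exp x s : F x s = exp ((x - 1) * ln s - s).
Proof. unfold F, Rpower. rewrite <- exp_plus. f_equal; ring. Qed.

Lemma exRF x a b : 0 < a -> 0 < b -> ex_RInt (F x) a b.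
Proof. intros; apply exR; auto. intros; apply F_cont; auto. Qed.

Lemma gamma_pos x : 0 < x -> 0 < Gamma x.
Proof.
  intros hx. destruct (Gchar x hx) as [H1 _].
  set (c := exp (- Rabs (x - 1) - 2)).
  assert (hc : 0 < c) by apply exp_pos.
  apply Rlt_le_trans with (RInt (F x) 1 2); [|apply H1; lra].
  apply Rlt_le_trans with (RInt (fun _ => c) 1 2).
  - rewrite RInt_const. unfold scal; simpl; unfold mult; simpl. lra.
  - apply RInt_le; [lra| |apply exRF; lra|].
    + apply ex_RInt_const.
    + intros s hs. rewrite F_exp. unfold c. apply exp_le.
      assert (0 <= ln s) by (rewrite <- ln_1; apply ln_le; lra).
      assert (ln s <= 1) by (pose proof (ln_le_m1 s ltac:(lra)); lra).
      destruct (Rabs_pos (x - 1)). 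
      unfold Rabs; destruct Rcase_abs; nra.
      unfold Rabs in *; destruct Rcase_abs; nra.
Qed.

Lemma ibp x a b : 0 < x -> 0 < a -> a <= b ->
  RInt (F (x + 1)) a b = Rpower a x * exp (- a) - Rpower b x * exp (- b) + x * RInt (F x) a b.
Proof.
  intros hx ha hab.
  assert (I3 : is_RInt (fun s => F (x + 1) s - x * F x s) a b
     (minus (- Rpower b x * exp (- b)) (- Rpower a x * exp (- a)))).
  { apply (@is_RInt_derive R_CompleteNormedModule (fun s => - Rpower s x * exp (- s))).
    - intros z [hz _]. assert (0 < z) by (eapply Rlt_le_trans; [|exact hz]; unfold Rmin; destruct Rle_dec; lra).
      unfold F, Rpower. auto_derive; [lra|].
      replace (x + 1 - 1) with x by ring.
      replace ((x - 1) * ln z) with (x * ln z + - ln z) by ring.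
      rewrite exp_plus, (exp_Ropp (ln z)), exp_ln by lra. field. lra.
    - intros z [hz _]. assert (0 < z) by (eapply Rlt_le_trans; [|exact hz]; unfold Rmin; destruct Rle_dec; lra).
      apply (@ex_derive_continuous R_AbsRing R_NormedModule). unfold F, Rpower. auto_derive. lra. }
  assert (I1 := @RInt_correct R_CompleteNormedModule _ _ _ (exRF (x + 1) a b ha ltac:(lra))).
  assert (I2 := @RInt_correct R_CompleteNormedModule _ _ _ (exRF x a b ha ltac:(lra))).
  assert (I4 := is_RInt_minus _ _ _ _ _ _ I1 (is_RInt_scal _ _ _ x _ I2)).
  assert (I5 : is_RInt (fun s => F (x + 1) s - x * F x s) a b
     (minus (RInt (F (x + 1)) a b) (scal x (RInt (F x) a b)))).
  { eapply is_RInt_ext; [|exact I4]. intros; reflexivity. }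
  pose proof (is_RInt_unique _ _ _ _ I3). pose proof (is_RInt_unique _ _ _ _ I5).
  rewrite H in H0. unfold minus, plus, opp, scal in H0; simpl in H0; unfold mult in H0; simpl in H0.
  lra.
Qed.

Lemma rpow_small x eps : 0 < x -> 0 < eps -> exists a, 0 < a /\ forall a', 0 < a' -> a' <= a -> Rpower a' x <= eps.
Proof.
  intros hx he. exists (Rpower eps (/ x)). split; [apply Rpower_pos|].
  intros a' h1 h2. apply Rle_trans with (Rpower (Rpower eps (/ x)) x).
  - apply Rle_Rpower_l; lra.
  - rewrite Rpower_mult. replace (/ x * x) with 1 by (field; lra). rewrite Rpower_1; lra.
Qed.

Lemma tail_small x eta : 0 < eta -> exists B, 1 <= B /\ forall s, B <= s -> Rpower s x * exp (- s) <= eta.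
Proof.
  intros he. destruct (powbound x) as [K [hK HK]].
  exists (Rmax 1 (2 * ln (K / eta))). split; [apply Rmax_l|].
  intros s hs. pose proof (Rmax_l 1 (2 * ln (K / eta))). pose proof (Rmax_r 1 (2 * ln (K / eta))).
  apply Rle_trans with (K * exp (s / 2) * exp (- s)).
  - apply Rmult_le_compat_r; [apply Rlt_le, exp_pos|]. apply HK; lra.
  - rewrite Rmult_assoc, <- exp_plus.
    assert (exp (s / 2 + - s) <= exp (ln (eta / K))).
    { apply exp_le. rewrite ln_div by lra. rewrite ln_div in H0, hs by lra. lra. }
    rewrite exp_ln in H1 by (apply Rdiv_lt_0_compat; lra).
    apply Rle_trans with (K * (eta / K)); [apply Rmult_le_compat_l; lra|]. right; field; lra.
Qed.

Lemma gamma_succ x : 0 < x -> Gamma (x + 1) = x * Gamma x.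
Proof.
  intros hx. assert (hx1 : 0 < x + 1) by lra.
  destruct (Gchar x hx) as [U1 L1]. destruct (Gchar (x + 1) hx1) as [U2 L2].
  pose proof (gamma_pos x hx).
  destruct (Rtotal_order (Gamma (x + 1)) (x * Gamma x)) as [h|[h|h]]; auto; exfalso.
  - set (d := x * Gamma x - Gamma (x + 1)).
    destruct (L1 (d / (3 * x)) ltac:(apply Rdiv_lt_0_compat; unfold d; lra)) as [a [b [ha [hab hi]]]].
    destruct (tail_small x (d / 3) ltac:(unfold d; lra)) as [B [hB HB]].
    pose proof (Rmax_l b B). pose proof (Rmax_r b B). set (b' := Rmax b B) in *.
    pose proof (U2 a b' ha ltac:(lra)).
    rewrite (ibp x a b') in H2 by (auto; lra).
    pose proof (RInt_mono (F x) a a b b' (fun s hs => F_cont x s hs) (fun s hs => F_nn x s hs) ha ltac:(lra) hab ltac:(lra)).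
    pose proof (HB b' ltac:(lra)).
    pose proof (Rpower_pos a x). pose proof (exp_pos (- a)).
    assert (x * (Gamma x - d / (3 * x)) < x * RInt (F x) a b') by (apply Rmult_lt_compat_l; lra).
    replace (x * (Gamma x - d / (3 * x))) with (x * Gamma x - d / 3) in H7 by (field; lra).
    unfold d in *. nra.
  - set (d := Gamma (x + 1) - x * Gamma x).
    destruct (L2 (d / 3) ltac:(unfold d; lra)) as [a [b [ha [hab hi]]]].
    destruct (rpow_small x (d / 3) hx ltac:(unfold d; lra)) as [a0 [ha0 Ha0]].
    pose proof (Rmin_l a a0). pose proof (Rmin_r a a0). set (a' := Rmin a a0) in *.
    assert (ha' : 0 < a') by (unfold a', Rmin; destruct Rle_dec; lra).
    pose proof (RInt_mono (F (x + 1)) a' a b b (fun s hs => F_cont _ s hs) (fun s hs => F_nn _ s hs) ha' ltac:(lra) hab ltac:(lra)).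
    rewrite (ibp x a' b) in H2 by (auto; lra).
    pose proof (U1 a' b ha' ltac:(lra)).
    pose proof (Ha0 a' ha' ltac:(lra)).
    assert (exp (- a') <= 1) by (rewrite <- exp_0; apply exp_le; lra).
    pose proof (Rpower_pos a' x). pose proof (Rpower_pos b x). pose proof (exp_pos (- b)).
    assert (Rpower a' x * exp (- a') <= d / 3) by nra.
    assert (x * RInt (F x) a' b <= x * Gamma x) by (apply Rmult_le_compat_l; lra).
    assert (0 <= Rpower b x * exp (- b)) by (apply Rmult_le_pos; lra).
    unfold d in *. lra.
Qed.

Lemma conv_pos u v l : 0 < u -> 0 < v -> 0 < l < 1 -> 0 < l * u + (1 - l) * v.
Proof.
  intros. assert (0 < l*u) by (apply Rmult_lt_0_compat; lra).
  assert (0 < (1-l)*v) by (apply Rmult_lt_0_compat; lra). lra.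
Qed.

Lemma young u v l : 0 < u -> 0 < v -> 0 < l < 1 ->
  Rpower u l * Rpower v (1 - l) <= l * u + (1 - l) * v.
Proof.
  intros hu hv hl. set (w := l * u + (1 - l) * v).
  assert (hw : 0 < w) by (unfold w; apply conv_pos; auto).
  pose proof (ln_le_m1 (u / w) ltac:(apply Rdiv_lt_0_compat; lra)).
  pose proof (ln_le_m1 (v / w) ltac:(apply Rdiv_lt_0_compat; lra)).
  rewrite ln_div in H, H0 by lra.
  assert (e : l * (u / w) + (1 - l) * (v / w) = 1).
  { assert (gen : forall W, W <> 0 -> W = l * u + (1 - l) * v -> l * (u / W) + (1 - l) * (v / W) = 1)
      by (intros W hW ->; field; auto).
    apply gen; [lra|reflexivity]. }
  assert (l * ln u + (1 - l) * ln v <= ln w) by nra.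
  unfold Rpower. rewrite <- exp_plus. rewrite <- (exp_ln w) by lra.
  apply exp_le. lra.
Qed.

Lemma Rpower_exp a l : Rpower (exp a) l = exp (l * a).
Proof. unfold Rpower. rewrite ln_exp. auto. Qed.

Lemma holder x y l : 0 < x -> 0 < y -> 0 < l < 1 ->
  Gamma (l * x + (1 - l) * y) <= Rpower (Gamma x) l * Rpower (Gamma y) (1 - l).
Proof.
  intros hx hy hl. set (z := l * x + (1 - l) * y).
  assert (hz : 0 < z) by (unfold z; apply conv_pos; auto).
  set (A := Gamma x). set (B := Gamma y).
  assert (hA : 0 < A) by (apply gamma_pos; auto).
  assert (hB : 0 < B) by (apply gamma_pos; auto).
  set (C := Rpower A l * Rpower B (1 - l)).
  assert (hC : 0 < C) by (unfold C; apply Rmult_lt_0_compat; apply Rpower_pos).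
  assert (pw : forall s, F z s <= C * (l * (F x s / A) + (1 - l) * (F y s / B))).
  { intros s.
    assert (e : F z s = Rpower (F x s) l * Rpower (F y s) (1 - l)).
    { rewrite !F_exp, !Rpower_exp, <- exp_plus. f_equal. unfold z. ring. }
    rewrite e.
    replace (F x s) with (A * (F x s / A)) at 1 by (field; lra).
    replace (F y s) with (B * (F y s / B)) at 1 by (field; lra).
    rewrite <- !Rpower_mult_distr by (try apply Rdiv_lt_0_compat; auto; apply F_pos).
    replace (Rpower A l * Rpower (F x s / A) l * (Rpower B (1 - l) * Rpower (F y s / B) (1 - l)))
      with (C * (Rpower (F x s / A) l * Rpower (F y s / B) (1 - l))) by (unfold C; ring).
    apply Rmult_le_compat_l; [lra|]. apply young; auto; apply Rdiv_lt_0_compat; auto; apply F_pos. }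
  destruct (Gchar x hx) as [U1 _]. destruct (Gchar y hy) as [U2 _].
  destruct (Gchar z hz) as [_ L3].
  destruct (Rle_lt_dec (Gamma z) C) as [h|h]; auto. exfalso.
  destruct (L3 (Gamma z - C) ltac:(lra)) as [a [b [ha [hab hi]]]].
  assert (I1 := @RInt_correct R_CompleteNormedModule _ _ _ (exRF x a b ha ltac:(lra))).
  assert (I2 := @RInt_correct R_CompleteNormedModule _ _ _ (exRF y a b ha ltac:(lra))).
  assert (I := is_RInt_scal _ _ _ C _ (is_RInt_plus _ _ _ _ _ _ (is_RInt_scal _ _ _ (l / A) _ I1) (is_RInt_scal _ _ _ ((1 - l) / B) _ I2))).
  assert (I' : is_RInt (fun s => C * (l * (F x s / A) + (1 - l) * (F y s / B))) a b
     (C * (l * (RInt (F x) a b / A) + (1 - l) * (RInt (F y) a b / B)))).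
  { replace (C * (l * (RInt (F x) a b / A) + (1 - l) * (RInt (F y) a b / B))) with
      (scal C (plus (scal (l / A) (RInt (F x) a b)) (scal ((1 - l) / B) (RInt (F y) a b)))).
    - eapply is_RInt_ext; [|exact I]. intros s _. unfold scal, plus; simpl; unfold mult; simpl. field. lra.
    - unfold scal, plus; simpl; unfold mult; simpl. field. lra. }
  assert (RInt (F z) a b <= RInt (fun s => C * (l * (F x s / A) + (1 - l) * (F y s / B))) a b).
  { apply RInt_le; auto. apply exRF; lra. eexists; exact I'. }
  rewrite (is_RInt_unique _ _ _ _ I') in H.
  pose proof (U1 a b ha hab) as hU1. pose proof (U2 a b ha hab) as hU2.
  fold A in hU1. fold B in hU2.
  assert (RInt (F x) a b / A <= 1).
  { apply Rle_trans with (A / A); [apply Rmult_le_compat_r; [apply Rlt_le, Rinv_0_lt_compat|]; lra|].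
    right; field; lra. }
  assert (RInt (F y) a b / B <= 1).
  { apply Rle_trans with (B / B); [apply Rmult_le_compat_r; [apply Rlt_le, Rinv_0_lt_compat|]; lra|].
    right; field; lra. }
  assert (l * (RInt (F x) a b / A) + (1 - l) * (RInt (F y) a b / B) <= 1) by nra.
  assert (C * (l * (RInt (F x) a b / A) + (1 - l) * (RInt (F y) a b / B)) <= C) by nra.
  lra.
Qed.

Definition g x := ln (Gamma x).

Lemma g_conv x y l : 0 < x -> 0 < y -> 0 < l < 1 ->
  g (l * x + (1 - l) * y) <= l * g x + (1 - l) * g y.
Proof.
  intros hx hy hl. unfold g.
  assert (0 < l * x + (1 - l) * y) by (apply conv_pos; auto).
  pose proof (gamma_pos _ H). pose proof (gamma_pos _ hx). pose proof (gamma_pos _ hy).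
  eapply Rle_trans; [apply ln_le; [auto| apply holder; auto]|].
  rewrite ln_mult by apply Rpower_pos. unfold Rpower. rewrite !ln_exp. lra.
Qed.

Lemma g_slope u v w : 0 < u -> u < v -> v < w ->
  (g v - g u) * (w - v) <= (g w - g v) * (v - u).
Proof.
  intros hu huv hvw. set (l := (w - v) / (w - u)).
  assert (hl : 0 < l < 1).
  { unfold l; split. apply Rdiv_lt_0_compat; lra.
    apply Rmult_lt_reg_r with (w - u); [lra|]. field_simplify; lra. }
  pose proof (g_conv u w l hu ltac:(lra) hl).
  replace (l * u + (1 - l) * w) with v in H by (unfold l; field; lra).
  assert (e : (g v - g u) * (w - v) - (g w - g v) * (v - u) = (w - u) * (g v - (l * g u + (1 - l) * g w)))
    by (unfold l; field; lra).
  nra.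
Qed.

Lemma g_succ x : 0 < x -> g (x + 1) = ln x + g x.
Proof.
  intros hx. unfold g. rewrite gamma_succ by auto. apply ln_mult; auto. apply gamma_pos; auto.
Qed.

Lemma frac_le a b c d : 0 < b -> 0 < d -> a * d <= c * b -> a / b <= c / d.
Proof.
  intros hb hd h.
  replace (a / b) with ((a * d) * / (b * d)) by (field; lra).
  replace (c / d) with ((c * b) * / (b * d)) by (field; lra).
  apply Rmult_le_compat_r; [|auto]. apply Rlt_le, Rinv_0_lt_compat, Rmult_lt_0_compat; auto.
Qed.

Definition E A t := g (A + t) - g A - t * ln A.

Lemma ln_ratio_up a b : 0 < a -> 0 < b -> ln b - ln a <= (b - a) / a.
Proof.
  intros. rewrite <- ln_div by auto. eapply Rle_trans; [apply ln_le_m1, Rdiv_lt_0_compat; auto|].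
  right; field; lra.
Qed.

Lemma ln_ratio_low a b : 0 < a -> 0 < b -> (b - a) / b <= ln b - ln a.
Proof.
  intros. rewrite <- ln_div by auto. eapply Rle_trans; [|apply ln_ge_1m, Rdiv_lt_0_compat; auto].
  right; field; lra.
Qed.

Lemma E_bound1 A t : 1 < A - Rabs t ->
  Rabs (E A t) <= Rabs t * (Rabs t + 1) / (A - Rabs t - 1).
Proof.
  intros h. unfold E.
  destruct (Rtotal_order t 0) as [ht|[ht|ht]].
  - assert (ea : Rabs t = - t) by (apply Rabs_left; auto). rewrite ea in *. set (s := - t) in *.
    replace t with (- s) by (unfold s; ring).
    assert (hs : 0 < s) by (unfold s; lra).
    pose proof (g_slope (A - s - 1) (A - s) A ltac:(lra) ltac:(lra) ltac:(lra)) as S1.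
    pose proof (g_slope (A - s) A (A + 1) ltac:(lra) ltac:(lra) ltac:(lra)) as S2.
    replace (A - s) with (A - s - 1 + 1) in S1 at 1 3 by ring.
    rewrite g_succ in S1 by lra. replace (A - s - 1 + 1) with (A - s) in S1 by ring.
    rewrite g_succ in S2 by lra.
    replace (A + - s) with (A - s) by ring.
    pose proof (ln_ratio_up (A - s - 1) A ltac:(lra) ltac:(lra)).
    replace ((A - (A - s - 1)) / (A - s - 1)) with ((s + 1) / (A - s - 1)) in H by (field; lra).
    assert (0 <= (s + 1) / (A - s - 1)) by (apply Rlt_le, Rdiv_lt_0_compat; lra).
    replace (s * (s + 1) / (A - s - 1)) with (s * ((s + 1) / (A - s - 1))) by (field; lra).
    apply Rabs_le. split; nra.
  - subst t. rewrite Rabs_R0 in *.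
    replace (g (A + 0) - g A - 0 * ln A) with 0 by (rewrite Rplus_0_r; ring).
    rewrite Rabs_R0. unfold Rdiv. rewrite !Rmult_0_l. lra.
  - assert (ea : Rabs t = t) by (apply Rabs_right; lra). rewrite ea in *.
    pose proof (g_slope (A - 1) A (A + t) ltac:(lra) ltac:(lra) ltac:(lra)) as S1.
    pose proof (g_slope A (A + t) (A + t + 1) ltac:(lra) ltac:(lra) ltac:(lra)) as S2.
    replace A with (A - 1 + 1) in S1 at 1 3 by ring.
    rewrite g_succ in S1 by lra. replace (A - 1 + 1) with A in S1 by ring.
    rewrite g_succ in S2 by lra.
    pose proof (ln_ratio_up A (A + t) ltac:(lra) ltac:(lra)).
    pose proof (ln_ratio_up (A - 1) A ltac:(lra) ltac:(lra)).
    replace ((A + t - A) / A) with (t / A) in H by (field; lra).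
    replace ((A - (A - 1)) / (A - 1)) with (/ (A - 1)) in H0 by (field; lra).
    assert (t / A <= (t + 1) / (A - t - 1)) by (apply frac_le; nra).
    assert (/ (A - 1) <= (t + 1) / (A - t - 1)).
    { replace (/ (A - 1)) with (1 / (A - 1)) by (field; lra). apply frac_le; nra. }
    assert (0 <= ln A - ln (A - 1)) by (pose proof (ln_ratio_low (A-1) A ltac:(lra) ltac:(lra));
       assert (0 <= (A - (A - 1)) / A) by (apply Rlt_le, Rdiv_lt_0_compat; lra); lra).
    replace (t * (t + 1) / (A - t - 1)) with (t * ((t + 1) / (A - t - 1))) by (field; lra).
    apply Rabs_le. split; nra.
Qed.

Lemma E_bound2 A t : 0 < A -> Rabs t <= A / 2 ->
  Rabs (E A t) <= Rabs t / A * (2 * Rabs t + 5).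
Proof.
  intros hA ht.
  assert (htu : - Rabs t <= t <= Rabs t).
  { split; [pose proof (Rle_abs (- t)); rewrite Rabs_Ropp in H; lra | apply Rle_abs]. }
  set (u := Rabs t) in *.
  assert (hu : 0 <= u) by apply Rabs_pos.
  assert (key : E A t = E (A + 1) t + t * (ln (A + 1) - ln A) - (ln (A + t) - ln A)).
  { unfold E. replace (A + 1 + t) with (A + t + 1) by ring.
    rewrite !g_succ by lra. ring. }
  pose proof (E_bound1 (A + 1) t ltac:(fold u; lra)) as B1. fold u in B1.
  replace (A + 1 - u - 1) with (A - u) in B1 by ring.
  assert (B1' : u * (u + 1) / (A - u) <= 2 * u * (u + 1) / A).
  { apply frac_le; try lra. assert (0 <= u * (u + 1)) by nra. nra. }
  pose proof (ln_ratio_up A (A + 1) hA ltac:(lra)) as B2.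
  pose proof (ln_ratio_low A (A + 1) hA ltac:(lra)) as B2'.
  replace ((A + 1 - A) / A) with (/ A) in B2 by (field; lra).
  assert (0 <= (A + 1 - A) / (A + 1)) by (apply Rlt_le, Rdiv_lt_0_compat; lra).
  pose proof (ln_ratio_up A (A + t) hA ltac:(lra)) as B3.
  pose proof (ln_ratio_low A (A + t) hA ltac:(lra)) as B3'.
  replace ((A + t - A) / A) with (t / A) in B3 by (field; lra).
  replace ((A + t - A) / (A + t)) with (t / (A + t)) in B3' by (field; lra).
  assert (B3'' : - 2 * u / A <= t / (A + t)) by (apply frac_le; nra).
  assert (B3u : t / A <= u / A) by (apply frac_le; nra).
  assert (hiA : 0 < / A) by (apply Rinv_0_lt_compat; auto).
  rewrite key.
  replace (u / A * (2 * u + 5)) with (2 * u * (u + 1) / A + u * / A + 2 * u / A) by (field; lra).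
  assert (X2 : Rabs (t * (ln (A + 1) - ln A)) <= u * / A).
  { rewrite Rabs_mult. apply Rmult_le_compat; try apply Rabs_pos; [unfold u; lra|].
    rewrite Rabs_right by lra. auto. }
  assert (X3 : Rabs (ln (A + t) - ln A) <= 2 * u / A).
  { apply Rabs_le. split.
    - replace (- (2 * u / A)) with (- 2 * u / A) by (field; lra). lra.
    - assert (u / A <= 2 * u / A) by (apply frac_le; nra). lra. }
  eapply Rle_trans; [apply Rabs_triang|].
  eapply Rle_trans; [apply Rplus_le_compat_r, Rabs_triang|].
  rewrite Rabs_Ropp. lra.
Qed.

Lemma rM_large N P y K : 0 < y -> 0 < K -> 1 <= N - P -> 0 <= P -> y / 2 <= P / N ->
  2 * K ^ 2 / y < N -> 2 * K ^ 2 < ln N -> K <= sqrt (ln N - ln (N - P)) * (N - P).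
Proof.
  intros hy hK hM hP hyP hN1 hN2.
  assert (hNp : 0 < N) by lra.
  set (M := N - P) in *. set (X := ln N - ln M).
  assert (hX : P / N <= X).
  { unfold X. pose proof (ln_ratio_low M N ltac:(lra) hNp).
    replace ((N - M) / N) with (P / N) in H by (unfold M; field; lra). auto. }
  assert (hPN : P = P / N * N) by (field; lra).
  assert (hyN : K ^ 2 < y / 2 * N).
  { apply Rmult_lt_compat_l with (r := y / 2) in hN1; [|lra].
    replace (y / 2 * (2 * K ^ 2 / y)) with (K ^ 2) in hN1 by (field; lra). auto. }
  assert (hXM : K ^ 2 <= X * M ^ 2).
  { destruct (Rle_lt_dec N (M * M)) as [c|c].
    - assert (0 <= P / N) by (apply Rmult_le_pos; [lra| apply Rlt_le, Rinv_0_lt_compat; lra]).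
      assert (P / N * N <= X * (M * M)) by (apply Rmult_le_compat; lra).
      assert (y / 2 * N <= P / N * N) by (apply Rmult_le_compat_r; lra).
      simpl. lra.
    - assert (ln (M * M) < ln N) by (apply ln_increasing; nra).
      rewrite ln_mult in H by lra.
      assert (K ^ 2 < X) by (unfold X; lra).
      assert (1 <= M * M) by nra.
      simpl. nra. }
  assert (hX0 : 0 <= X) by (apply Rle_trans with (P / N); [apply Rmult_le_pos; [lra| apply Rlt_le, Rinv_0_lt_compat; lra]|auto]).
  pose proof (pow2_sqrt X hX0). pose proof (sqrt_pos X).
  fold X. destruct (Rle_lt_dec K (sqrt X * M)) as [c|c]; auto.
  exfalso. assert (0 <= sqrt X * M) as q1 by nra.
  assert ((sqrt X * M) ^ 2 < K ^ 2) as q2 by (simpl; nra).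
  replace ((sqrt X * M) ^ 2) with (sqrt X ^ 2 * M ^ 2) in q2 by ring. rewrite H in q2. lra.
Qed.

Lemma expr_eq A1 A2 t : 0 < A1 -> 0 < A2 -> 0 < A1 + t -> 0 < A2 + t ->
  ln (Gamma (A1 + t) / Gamma A1 * (Gamma A2 / Gamma (A2 + t))) - (ln A1 - ln A2) * t
  = E A1 t - E A2 t.
Proof.
  intros h1 h2 h3 h4.
  pose proof (gamma_pos _ h1). pose proof (gamma_pos _ h2).
  pose proof (gamma_pos _ h3). pose proof (gamma_pos _ h4).
  rewrite ln_mult by (apply Rdiv_lt_0_compat; auto).
  rewrite !ln_div by auto. unfold E, g. ring.
Qed.

Definition Tb C y := Rabs C / sqrt (y / 2).
Definition del C y eps := Rmin (1 / 2) (eps / (2 * (2 * Tb C y + 5))).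
Definition Kb C y eps := 2 * Rabs C / del C y eps + 1.

Lemma point N P t C y eps : 0 < y -> 0 < eps -> 1 <= N - P -> 0 <= P -> y / 2 <= P / N ->
  Rabs t <= C * / sqrt (- ln (1 - P / N)) ->
  2 * Kb C y eps ^ 2 / y < N -> 2 * Kb C y eps ^ 2 < ln N ->
  Rabs (ln (Gamma (N / 2 + t) / Gamma (N / 2) * (Gamma ((N - P) / 2) / Gamma ((N - P) / 2 + t)))
        - sqrt (- ln (1 - P / N)) ^ 2 * t) < eps.
Proof.
  intros hy he hM hP hyP ht hN1 hN2.
  assert (hN : 0 < N) by lra.
  set (M := N - P) in *.
  assert (X0 : - ln (1 - P / N) = ln N - ln M).
  { replace (1 - P / N) with (M / N) by (unfold M; field; lra). rewrite ln_div; lra. }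
  rewrite X0 in *.
  assert (hX : y / 2 <= ln N - ln M).
  { pose proof (ln_ratio_low M N ltac:(lra) hN).
    replace ((N - M) / N) with (P / N) in H by (unfold M; field; lra). lra. }
  set (r := sqrt (ln N - ln M)) in *.
  assert (hsy : 0 < sqrt (y / 2)) by (apply sqrt_lt_R0; lra).
  assert (hr1 : sqrt (y / 2) <= r) by (apply sqrt_le_1; lra).
  assert (hr : 0 < r) by lra.
  set (T := Tb C y). set (d := del C y eps). set (K := Kb C y eps) in *.
  assert (hT0 : 0 <= T) by (unfold T, Tb; apply Rmult_le_pos; [apply Rabs_pos| apply Rlt_le, Rinv_0_lt_compat; auto]).
  assert (hd0 : 0 < d).
  { unfold d, del. fold T. apply Rmin_glb_lt; [lra|]. apply Rdiv_lt_0_compat; lra. }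
  assert (hd1 : d <= 1 / 2) by (unfold d, del; apply Rmin_l).
  assert (hd2 : d <= eps / (2 * (2 * T + 5))) by (unfold d, del; apply Rmin_r).
  assert (hK : 0 < K).
  { unfold K, Kb. fold d. assert (0 <= 2 * Rabs C / d) by (apply Rmult_le_pos; [pose proof (Rabs_pos C); lra| apply Rlt_le, Rinv_0_lt_compat; auto]). lra. }
  assert (hdK : 2 * Rabs C < d * K).
  { unfold K, Kb. fold d. replace (d * (2 * Rabs C / d + 1)) with (2 * Rabs C + d) by (field; lra). lra. }
  pose proof (rM_large N P y K hy hK hM hP hyP hN1 hN2) as hrM. fold M r in hrM.
  assert (htr : Rabs t * r <= Rabs C).
  { assert (C * / r <= Rabs C * / r) by (apply Rmult_le_compat_r; [apply Rlt_le, Rinv_0_lt_compat; auto| apply Rle_abs]).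
    assert (Rabs t <= Rabs C * / r) by lra.
    apply Rmult_le_compat_r with (r := r) in H0; [|lra].
    replace (Rabs C * / r * r) with (Rabs C) in H0 by (field; lra). auto. }
  assert (htT : Rabs t <= T).
  { unfold T, Tb. apply Rle_trans with (Rabs C * / r).
    - apply Rmult_le_reg_r with r; auto. replace (Rabs C * / r * r) with (Rabs C) by (field; lra). auto.
    - apply Rmult_le_compat_l; [apply Rabs_pos|]. apply Rinv_le_contravar; auto. }
  assert (hw : 2 * Rabs t < d * M).
  { assert (2 * Rabs t * r < d * M * r).
    { assert (d * K <= d * (r * M)) by (apply Rmult_le_compat_l; lra). nra. }
    apply Rmult_lt_reg_r with r; auto. }
  pose proof (Rabs_pos t).
  assert (hA2 : Rabs t <= M / 2 / 2) by nra.
  assert (hA1 : Rabs t <= N / 2 / 2) by (unfold M in hA2; lra).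
  assert (htu : - Rabs t <= t <= Rabs t).
  { split; [pose proof (Rle_abs (- t)); rewrite Rabs_Ropp in H0; lra | apply Rle_abs]. }
  unfold r; rewrite pow2_sqrt by lra.
  replace (ln N - ln M) with (ln (N / 2) - ln (M / 2)) by (rewrite !ln_div by lra; ring).
  rewrite expr_eq by lra.
  pose proof (E_bound2 (N / 2) t ltac:(lra) hA1) as B1.
  pose proof (E_bound2 (M / 2) t ltac:(lra) hA2) as B2.
  assert (w2 : Rabs t / (M / 2) < d).
  { apply Rmult_lt_reg_r with (M / 2); [lra|]. replace (Rabs t / (M / 2) * (M / 2)) with (Rabs t) by (field; lra). lra. }
  assert (w1 : Rabs t / (N / 2) <= Rabs t / (M / 2)) by (apply frac_le; unfold M in *; nra).
  assert (hw0 : 0 <= Rabs t / (N / 2)) by (apply Rmult_le_pos; [lra| apply Rlt_le, Rinv_0_lt_compat; lra]).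
  assert (e1 : Rabs t / (N / 2) * (2 * Rabs t + 5) <= d * (2 * T + 5)) by (apply Rmult_le_compat; lra).
  assert (e2 : Rabs t / (M / 2) * (2 * Rabs t + 5) < d * (2 * T + 5)).
  { apply Rle_lt_trans with (Rabs t / (M / 2) * (2 * T + 5)). apply Rmult_le_compat_l; lra.
    apply Rmult_lt_compat_r; lra. }
  assert (e3 : d * (2 * T + 5) <= eps / 2).
  { apply Rmult_le_compat_r with (r := 2 * T + 5) in hd2; [|lra].
    replace (eps / (2 * (2 * T + 5)) * (2 * T + 5)) with (eps / 2) in hd2 by (field; lra). auto. }
  eapply Rle_lt_trans; [apply Rabs_triang|]. rewrite Rabs_Ropp. lra.
Qed.

Theorem lemma3 (p : nat -> nat) (t : nat -> R) (y : R) :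
  (forall n : nat, (0 < n)%nat -> (p n < n)%nat) ->
  0 < y <= 1 ->
  is_lim_seq (fun n : nat => INR (p n) / INR n) y ->
  (exists (C : R) (N : nat), forall n : nat, (N <= n)%nat ->
      Rabs (t n) <= C * / r_seq p n) ->
  is_lim_seq
    (fun n : nat =>
       ln (Gamma (INR n / 2 + t n) / Gamma (INR n / 2)
           * (Gamma ((INR n - INR (p n)) / 2)
              / Gamma ((INR n - INR (p n)) / 2 + t n)))
       - (r_seq p n) ^ 2 * t n)
    0.
Proof.
  intros Hp Hy Hlim [C [N0 HC]].
  apply is_lim_seq_spec. intros eps.
  set (K := Kb C y eps).
  assert (EV2 : eventually (fun n => y / 2 <= INR (p n) / INR n)).
  { apply is_lim_seq_spec in Hlim. destruct (Hlim (mkposreal (y / 2) ltac:(lra))) as [n1 Hn1].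
    exists n1. intros n hn. specialize (Hn1 n hn). simpl in Hn1.
    apply Rabs_def2 in Hn1. lra. }
  assert (EV4 : eventually (fun n => Rmax (2 * K ^ 2 / y) (exp (2 * K ^ 2)) < INR n)).
  { pose proof is_lim_seq_INR as HI. apply is_lim_seq_spec in HI. apply HI. }
  assert (EV3 : eventually (fun n => (N0 <= n)%nat /\ (1 <= n)%nat)).
  { exists (Nat.max N0 1). intros n hn. split; lia. }
  destruct EV2 as [n2 H2]. destruct EV4 as [n4 H4]. destruct EV3 as [n3 H3].
  exists (Nat.max n2 (Nat.max n4 n3)). intros n hn.
  specialize (H2 n ltac:(lia)). specialize (H4 n ltac:(lia)). specialize (H3 n ltac:(lia)).
  destruct H3 as [h3a h3b].
  rewrite Rminus_0_r. unfold r_seq.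
  pose proof (Hp n h3b) as hpn.
  assert (hM : 1 <= INR n - INR (p n)).
  { assert (INR (S (p n)) <= INR n) by (apply le_INR; lia). rewrite S_INR in H. lra. }
  pose proof (Rmax_l (2 * K ^ 2 / y) (exp (2 * K ^ 2))).
  pose proof (Rmax_r (2 * K ^ 2 / y) (exp (2 * K ^ 2))).
  apply (point _ _ _ C y).
  - lra.
  - apply cond_pos.
  - lra.
  - apply pos_INR.
  - lra.
  - specialize (HC n h3a). unfold r_seq in HC. auto.
  - fold K. lra.
  - fold K. rewrite <- (ln_exp (2 * K ^ 2)). apply ln_increasing; [apply exp_pos|lra].
Qed.
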